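(* Let $A$ and $B$ be tournaments and $T=A+B$. If $F$ is a finite subset of $T$ (viewed as a sub-tournament) with $F\cap A\ne\emptyset$ and $z\in B\setminus F$, then $\mathsf{rk}_T(F\cup\{z\})=0$.
   Context: A tournament is a structure $(T,\to)$ such that for any two distinct $u,v$ exactly one of $u\to v$, $v\to u$ holds. For tournaments $A,B$, $A+B$ is the tournament on the disjoint union $A\sqcup B$ keeping the orientations inside $A$ and inside $B$, with $a\to b$ for all $a\in A$, $b\in B$. Let $\mathcal F$ be the class of finite tournaments; substructures are induced sub-tournaments and $\mathsf{age}(X)$ is the set of finite sub-tournaments of $X$. For $A'\le B'$, $B'$ is a prime extension of $A'$ if $|B'\setminus A'|=1$; a realization of $B'$ in $X$ (where $A'\le X$) is $C\le X$ with $A'\le C$ and an isomorphism $B'\to C$ fixing $A'$ pointwise. For $F\in\mathsf{age}(X)$ define by recursion: $\mathsf{rk}_X(F)\ge0$ always; $\mathsf{rk}_X(F)\ge\alpha+1$ iff every prime extension $B'\in\mathcal F$ of $F$ has a realization $C$ in $X$ with $\mathsf{rk}_X(C)\ge\alpha$; for limit $\alpha$, $\mathsf{rk}_X(F)\ge\alpha$ iff $\mathsf{rk}_X(F)\ge\beta$ for all $\beta<\alpha$. $\mathsf{rk}_X(F)=\sup\{\alpha:\mathsf{rk}_X(F)\ge\alpha\}$ (or $\infty$). *)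

(* Defs.v *)
From Stdlib Require Import List.
Set Implicit Arguments.

(** A tournament: for distinct u v exactly one of u -> v, v -> u;
    no loops (asymmetry applied to u = v). *)
Record tournament := Tournament {
  carrier :> Type;
  arr : carrier -> carrier -> Prop;
  arr_asym : forall x y, arr x y -> ~ arr y x;
  arr_tot : forall x y, x <> y -> arr x y \/ arr y x
}.
Arguments arr {t} _ _.

Definition sum_arr (A B : tournament) (u v : A + B) : Prop :=
  match u, v with
  | inl a, inl a' => arr a a'
  | inr b, inr b' => arr b b'
  | inl _, inr _ => True
  | inr _, inl _ => False
  end.

Lemma sum_arr_asym (A B : tournament) (x y : A + B) :
  @sum_arr A B x y -> ~ @sum_arr A B y x.
Proof.
  destruct x, y; simpl; auto; apply arr_asym.
Qed.

Lemma sum_arr_tot (A B : tournament) (x y : A + B) :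
  x <> y -> @sum_arr A B x y \/ @sum_arr A B y x.
Proof.
  destruct x as [a|b], y as [a'|b']; simpl; auto.
  - intro H; apply arr_tot; congruence.
  - intro H; apply arr_tot; congruence.
Qed.

Definition tsum (A B : tournament) : tournament :=
  @Tournament (A + B)%type (@sum_arr A B) (@sum_arr_asym A B) (@sum_arr_tot A B).

Definition finite_set {X : Type} (F : X -> Prop) : Prop :=
  exists l : list X, forall x, F x -> In x l.

Definition finite_type (Y : Type) : Prop :=
  exists l : list Y, forall y, In y l.

(** B' (a finite tournament Y together with the substructure embedding
    e of the sub-tournament F of X) is a prime extension of F:
    F <= B' via e, and |B' \ F| = 1. *)
Definition prime_ext {X : tournament} (F : X -> Prop) (Y : tournament)
    (e : {x : X | F x} -> Y) : Prop :=
  finite_type Y /\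
  (forall a b, e a = e b -> a = b) /\
  (forall a b, arr (e a) (e b) <-> arr (proj1_sig a) (proj1_sig b)) /\
  (exists y0 : Y, (forall a, e a <> y0) /\
     forall y : Y, y <> y0 -> exists a, e a = y).

Definition realization {X : tournament} (F : X -> Prop) (Y : tournament)
    (e : {x : X | F x} -> Y) (f : Y -> X) : Prop :=
  (forall u v, f u = f v -> u = v) /\
  (forall a, f (e a) = proj1_sig a) /\
  (forall u v, arr u v <-> arr (f u) (f v)).

Definition image {Y X : Type} (f : Y -> X) : X -> Prop :=
  fun x => exists y, f y = x.

(** rk_X(F) >= n, for finite levels n. *)
Fixpoint rk_ge (X : tournament) (n : nat) (F : X -> Prop) : Prop :=
  match n with
  | O => True
  | S m => forall (Y : tournament) (e : {x : X | F x} -> Y),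
      prime_ext F Y e ->
      exists f : Y -> X, @realization X F Y e f /\ rk_ge X m (image f)
  end.

Definition rk_eq (X : tournament) (F : X -> Prop) (n : nat) : Prop :=
  rk_ge X n F /\ ~ rk_ge X (S n) F.

(* Main.v *)
Require Import Defs.
From Stdlib Require Import List Classical ProofIrrelevance.

Section Ext.
Variables (X : tournament) (G : X -> Prop) (w : X).

Definition ext_arr (u v : option {x : X | G x}) : Prop :=
  match u, v with
  | Some a, Some b => arr (proj1_sig a) (proj1_sig b)
  | None, Some b => proj1_sig b <> w
  | Some a, None => proj1_sig a = w
  | None, None => False
  end.

Lemma ext_asym x y : ext_arr x y -> ~ ext_arr y x.
Proof. destruct x, y; simpl; auto. apply arr_asym. Qed.

Lemma ext_tot x y : x <> y -> ext_arr x y \/ ext_arr y x.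
Proof.
  destruct x as [a|], y as [b|]; simpl; intros H.
  - apply arr_tot. intro E. apply H. f_equal.
    destruct a, b; simpl in E; subst; f_equal; apply proof_irrelevance.
  - destruct (classic (proj1_sig a = w)); auto.
  - destruct (classic (proj1_sig b = w)); auto.
  - congruence.
Qed.

Definition extT : tournament := @Tournament (option {x : X | G x}) ext_arr ext_asym ext_tot.
End Ext.

Lemma list_sig (X : Type) (G : X -> Prop) (l : list X) :
  exists L : list {x | G x}, forall s, In (proj1_sig s) l -> In s L.
Proof.
  induction l as [|x l IH].
  - exists nil. simpl; tauto.
  - destruct IH as [L HL]. destruct (classic (G x)) as [Hx|Hx].
    + exists (exist _ x Hx :: L). intros [y Hy] [E|E]; simpl in *.
      * left. subst. f_equal. apply proof_irrelevance.
      * right. apply (HL (exist _ y Hy)). exact E.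
    + exists L. intros [y Hy] [E|E]; simpl in *.
      * subst; contradiction.
      * apply (HL (exist _ y Hy)). exact E.
Qed.

Theorem lemma5p4 (A B : tournament) (F : tsum A B -> Prop) :
  finite_set F ->
  (exists a : A, F (inl a)) ->
  forall z : B, ~ F (inr z) ->
  rk_eq (tsum A B) (fun x => F x \/ x = inr z) 0.
Proof.
  intros [l Hl] [a Ha] z Hz. split; [exact I|].
  set (G := fun x : tsum A B => F x \/ x = inr z).
  intro H. simpl in H.
  destruct (H (@extT (tsum A B) G (inr z)) (@Some _)) as [f [[finj [fe farr]] _]].
  - split; [|split; [|split]].
    + destruct (@list_sig _ G (inr z :: l)) as [L HL].
      exists (None :: map (@Some _) L). intros [s|]; [|left; reflexivity].
      right. apply in_map. apply HL. destruct s as [x [Fx|Ex]]; simpl.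
      * right; auto.
      * left; auto.
    + intros p q E; congruence.
    + intros p q; simpl; tauto.
    + exists None. split; [congruence|]. intros [y|] Hy; [exists y; auto|congruence].
  - set (zs := exist G (inr z) (or_intror eq_refl)).
    set (as_ := exist G (inl a) (or_introl Ha)).
    assert (H1 : @ext_arr (tsum A B) G (inr z) (Some zs) None) by (simpl; reflexivity).
    assert (H2 : @ext_arr (tsum A B) G (inr z) None (Some as_)) by (simpl; discriminate).
    apply (farr (Some zs) None) in H1. apply (farr None (Some as_)) in H2.
    pose proof (fe zs) as E1. pose proof (fe as_) as E2. simpl in E1, E2.
    assert (K : forall u w v : A + B, @sum_arr A B u w -> @sum_arr A B w v -> u = inr z -> v = inl a -> False).
    { intros u w v X1 X2 -> ->. destruct w; simpl in *; auto. }
    eapply K; [exact H1 | exact H2 | exact E1 | exact E2].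
Qed.
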